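(* Let $k\ge1$, $1\le r\le(2k+1)^2$, $\mathcal{B}=\mathcal{B}(2k+1,2k+1;r)$ and $G=D_4$. Then \[|\mathcal{O}_G(\mathcal{B})|=\frac18\left(\binom{(2k+1)^2}{r}+2\binom{k(k+1)}{\frac r4}+2\binom{k(k+1)}{\frac{r-1}{4}}+\binom{2k(k+1)}{\lfloor\frac r2\rfloor}+4\sum_{t=0}^{r}\binom{2k+1}{t}\binom{k(2k+1)}{\frac{r-t}{2}}\right).\]
   Context: $\mathcal{B}(2k+1,2k+1;r)$ is the set of all subsets of exactly $r$ cells (boards with $r$ blocked cells) of a $(2k+1)\times(2k+1)$ grid. The dihedral group $D_4$ of the 8 symmetries of the square (four rotations about the center and reflections across the horizontal midline, vertical midline and both diagonals) acts on boards; $\mathcal{O}_G(\mathcal{B})$ is the set of orbits (equivalence classes). Convention: a binomial coefficient $\binom{a}{b}$ is $0$ when $b$ is not a nonnegative integer or $b>a$. *)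

(* Defs.v *)
From mathcomp Require Import all_boot all_order all_algebra.
Set Implicit Arguments. Unset Strict Implicit. Unset Printing Implicit Defensive.

Definition cell (n : nat) := ('I_n * 'I_n)%type.

(* The 8 symmetries of the square (dihedral group D_4) acting on cells:
   0 identity, 1 rotation by 90, 2 rotation by 180, 3 rotation by 270,
   4 reflection across horizontal midline, 5 across vertical midline,
   6 across main diagonal, 7 across anti-diagonal. *)
Definition d4 (n : nat) (g : 'I_8) (c : cell n) : cell n :=
  let (i, j) := c in
  match val g with
  | 0 => (i, j)
  | 1 => (j, rev_ord i)
  | 2 => (rev_ord i, rev_ord j)
  | 3 => (rev_ord j, i)
  | 4 => (rev_ord i, j)
  | 5 => (i, rev_ord j)
  | 6 => (j, i)
  | _ => (rev_ord j, rev_ord i)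
  end.

(* B(n,n;r): boards = sets of exactly r blocked cells. *)
Definition boards (n r : nat) : {set {set cell n}} :=
  [set B : {set cell n} | #|B| == r].

Definition d4orbit (n : nat) (B : {set cell n}) : {set {set cell n}} :=
  [set X : {set cell n} | [exists g : 'I_8, X == d4 g @: B]].

Definition d4orbits (n r : nat) : {set {set {set cell n}}} :=
  [set d4orbit B | B in boards n r].

(* binomial a (num/den) with the convention: 0 if num/den is not an integer
   (num, den are natural numbers, den > 0 in uses). *)
Definition binq (a num den : nat) : nat :=
  if den %| num then 'C(a, num %/ den) else 0.

(* Main.v *)
Require Import Defs.
From mathcomp Require Import all_boot all_order all_algebra all_fingroup.
From mathcomp Require Import zify ring.
Set Implicit Arguments. Unset Strict Implicit. Unset Printing Implicit Defensive.

Section Count.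
Variables (T : finType) (s : {perm T}) (m : nat).
Hypothesis m_gt0 : (0 < m)%N.
Hypothesis hm : forall x, s x != x -> #|porbit s x| = m.

Let F := [set x | s x == x].
Let P : {set {set T}} := porbit s @: ~: F.

Lemma expfix x i : s x = x -> (s ^+ i)%g x = x.
Proof. by move=> sx; elim: i => [|i IH]; rewrite ?expg0 ?perm1 // expgSr permM IH sx. Qed.

Lemma porbit_fix x : x \in F -> porbit s x = [set x].
Proof.
rewrite inE => /eqP sx; apply/setP => y; rewrite inE.
apply/porbitP/eqP => [[i ->]|->]; first exact: expfix.
by exists 0; rewrite expg0 perm1.
Qed.

Lemma porbit_same x y : y \in porbit s x -> porbit s y = porbit s x.
Proof. by rewrite -eq_porbit_mem => /eqP. Qed.

Lemma P_subF O : O \in P -> O \subset ~: F.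
Proof.
case/imsetP=> x; rewrite inE => xF ->; apply/subsetP => y yO.
rewrite inE; apply/negP => yF.
have := porbit_same yO; rewrite porbit_fix // => E.
have : x \in porbit s x := porbit_id s x.
by rewrite -E inE => /eqP exy; move: xF; rewrite exy yF.
Qed.

Lemma P_triv : trivIset P.
Proof.
apply/trivIsetP => A B.
move=> /imsetP[x _ ->].
move=> /imsetP[y _ ->] ne.
rewrite -setI_eq0; apply/eqP/setP => z; rewrite !inE; apply/negP => /andP[zx zy].
by move: ne; rewrite -(porbit_same zx) -(porbit_same zy) eqxx.
Qed.

Lemma P_card O : O \in P -> #|O| = m.
Proof. by case/imsetP=> x; rewrite !inE => xF ->; apply: hm. Qed.

Lemma size_g (A : {set T}) (Q : {set {set T}}) : A \subset F -> Q \subset P ->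
  #|A :|: cover Q| = (#|A| + m * #|Q|)%N.
Proof.
move=> AF QP.
have triv : trivIset Q := trivIsetS QP P_triv.
have CQ : #|cover Q| = (m * #|Q|)%N.
  move: triv => /eqP <-; rewrite mulnC -sum_nat_const; apply: eq_bigr => O OQ.
  by apply: P_card; apply: (subsetP QP).
have AQ : A :&: cover Q = set0.
  apply/setP => x; rewrite !inE; apply/negP => /andP[xA /bigcupP[O OQ xO]].
  have := subsetP (P_subF (subsetP QP _ OQ)) _ xO.
  by rewrite inE (subsetP AF _ xA).
by rewrite cardsU AQ cards0 subn0 CQ.
Qed.

Lemma inv_closed (B : {set T}) : (forall x, x \in B -> s x \in B) -> s @: B = B.
Proof.
move=> cl; apply/eqP; rewrite eqEcard card_imset ?leqnn ?andbT; last exact: perm_inj.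
by apply/subsetP => _ /imsetP[x xB ->]; apply: cl.
Qed.

Lemma inv_porbit (B : {set T}) x : s @: B = B -> x \in B -> porbit s x \subset B.
Proof.
move=> inv xB; apply/subsetP => y /porbitP[i ->].
elim: i => [|i IH]; first by rewrite expg0 perm1.
by rewrite expgSr permM -inv; apply: imset_f.
Qed.

Lemma inv_g (A : {set T}) (Q : {set {set T}}) : A \subset F -> Q \subset P ->
  s @: (A :|: cover Q) = A :|: cover Q.
Proof.
move=> AF QP; apply: inv_closed => x; rewrite !inE => /orP[xA|/bigcupP[O OQ xO]].
  by have := subsetP AF _ xA; rewrite inE => /eqP ->; rewrite xA.
apply/orP; right; apply/bigcupP; exists O => //.
case/imsetP: (subsetP QP _ OQ) => y _ Oy; rewrite Oy in xO *.
rewrite -(porbit_same xO); have := mem_porbit s 1 x; by rewrite expg1.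
Qed.

Lemma g_capF (A : {set T}) (Q : {set {set T}}) : A \subset F -> Q \subset P ->
  (A :|: cover Q) :&: F = A.
Proof.
move=> AF QP; apply/setP => x; rewrite !inE.
case xA: (x \in A); first by have := subsetP AF _ xA; rewrite inE.
apply/negP => /andP[/bigcupP[O OQ xO] xF].
by have := subsetP (P_subF (subsetP QP _ OQ)) _ xO; rewrite !inE xF.
Qed.

Lemma g_Q (A : {set T}) (Q : {set {set T}}) : A \subset F -> Q \subset P ->
  [set O in P | O \subset A :|: cover Q] = Q.
Proof.
move=> AF QP; apply/setP => O; rewrite !inE.
apply/andP/idP => [[OP Osub]|OQ]; last first.
  split; first exact: subsetP QP _ OQ.
  by apply/subsetP => x xO; rewrite inE; apply/orP; right; apply/bigcupP; exists O.
case/imsetP: (OP) => x xF Ox.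
have xO : x \in O by rewrite Ox porbit_id.
have := subsetP Osub _ xO; rewrite inE => /orP[xA|/bigcupP[O' O'Q xO']].
  by have := subsetP AF _ xA; move: xF; rewrite !inE => /negP.
case/imsetP: (subsetP QP _ O'Q) => y _ O'y.
have xy : x \in porbit s y by rewrite -O'y.
by rewrite Ox (porbit_same xy) -O'y.
Qed.

Lemma decomp (B : {set T}) : s @: B = B ->
  B = (B :&: F) :|: cover [set O : {set T} in P | O \subset B].
Proof.
move=> inv; apply/setP => x; rewrite !inE.
apply/idP/idP => [xB|/orP[/andP[]//|/bigcupP[O]]]; last by rewrite inE => /andP[_ /subsetP]; apply.
rewrite xB /=; case xF: (s x == x) => //=.
apply/bigcupP; exists (porbit s x); last exact: porbit_id.
by rewrite inE imset_f ?inE ?xF // inv_porbit.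
Qed.

Definition Dset r := [set p : {set T} * {set {set T}} |
  [&& p.1 \subset F, p.2 \subset P & (#|p.1| + m * #|p.2| == r)%N]].

Lemma card_inv r : #|[set B : {set T} | (#|B| == r) && (s @: B == B)]| = #|Dset r|.
Proof.
have -> : [set B : {set T} | (#|B| == r) && (s @: B == B)] =
          [set p.1 :|: cover p.2 | p in Dset r].
  apply/setP => B; rewrite inE; apply/andP/imsetP => [[/eqP cB /eqP inv]|[[A Q]]].
    exists (B :&: F, [set O : {set T} in P | O \subset B]); last exact: decomp.
    rewrite inE /= subsetIr /=; apply/andP; split.
      by apply/subsetP => O; rewrite inE => /andP[].
    rewrite -size_g ?subsetIr //; last by apply/subsetP => O; rewrite inE => /andP[].
    by rewrite -decomp // cB.
  rewrite inE /= => /and3P[AF QP /eqP cr] ->.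
  by rewrite size_g // cr inv_g.
apply: card_in_imset => [[A Q]] [A' Q']; rewrite !inE /= => /and3P[AF QP _] /and3P[AF' QP' _] E.
have := congr1 (fun X : {set T} => X :&: F) E; rewrite /= !g_capF // => ->.
have := congr1 (fun X : {set T} => [set O in P | O \subset X]) E; rewrite /= !g_Q // => ->.
by [].
Qed.

Lemma cntQ r a : #|[set Q : {set {set T}} | (Q \subset P) && (a + m * #|Q| == r)]| =
  if (a <= r)%N then binq #|P| (r - a) m else 0.
Proof.
case: leqP => ar; last first.
  apply/eqP; rewrite cards_eq0; apply/eqP/setP => Q; rewrite !inE.
  apply/negP => /andP[_ /eqP e]; move: ar; rewrite -e; lia.
rewrite /binq; case: ifP => dv.
  rewrite -cards_draws; apply: eq_card => Q; rewrite !inE; congr (_ && _).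
  case/dvdnP: dv => q eq; rewrite eq mulnK //.
  apply/eqP/eqP => [e|->]; last lia.
  have : (m * #|Q| = q * m)%N by lia.
  by rewrite mulnC => /eqP; rewrite eqn_pmul2r // => /eqP.
apply/eqP; rewrite cards_eq0; apply/eqP/setP => Q; rewrite !inE.
apply/negP => /andP[_ /eqP e]; move: dv; have -> : (r - a = #|Q| * m)%N by lia.
by rewrite dvdn_mull.
Qed.

Lemma sum_ind (I : finType) (p : pred I) : (\sum_(i : I) (p i : nat) = #|[set i | p i]|)%N.
Proof. by rewrite -sum1dep_card [RHS]big_mkcond; apply: eq_bigr => i _; case: (p i). Qed.

Lemma sum_pick r a (c : nat -> nat) :
  (\sum_(0 <= t < r.+1) (a == t) * c t = if (a <= r)%N then c a else 0)%N.
Proof.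
case: leqP => ar.
  have ha : a \in index_iota 0 r.+1 by rewrite mem_index_iota; lia.
  rewrite (bigD1_seq a ha (iota_uniq _ _)) /= eqxx mul1n.
  by rewrite big1 ?addn0 // => t ta; rewrite eq_sym (negbTE ta).
rewrite big_seq big1 // => t; rewrite mem_index_iota => /andP[_ tr].
have -> : (a == t) = false by apply/eqP; lia.
by [].
Qed.

Lemma card_D r : #|Dset r| = (\sum_(0 <= t < r.+1) 'C(#|F|, t) * binq #|P| (r - t) m)%N.
Proof.
transitivity (\sum_(A : {set T}) \sum_(Q : {set {set T}}) (if (A,Q) \in Dset r then 1 else 0))%N.
  by rewrite pair_big /= -sum1_card big_mkcond /=; apply: eq_bigr => -[A Q] _.
transitivity (\sum_(A : {set T}) \sum_(0 <= t < r.+1) ((A \subset F) && (#|A| == t)) * binq #|P| (r - t) m)%N.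
  apply: eq_bigr => A _; rewrite -big_mkcond sum1dep_card.
  case AF: (A \subset F); last first.
    rewrite big1 ?mul0n //; apply/eqP; rewrite cards_eq0; apply/eqP/setP => Q.
    by rewrite !inE /= AF.
  rewrite (sum_pick r #|A| (fun t => binq #|P| (r - t) m)) -cntQ.
  by apply: eq_card => Q; rewrite !inE /= AF.
rewrite exchange_big /=; apply: eq_bigr => t _.
rewrite -big_distrl /= sum_ind -cards_draws mulnC; congr (_ * _)%N.
Qed.

Lemma card_T : #|T| = (#|F| + m * #|P|)%N.
Proof.
rewrite -size_g ?subxx //; apply: eq_card => x; rewrite !inE.
case: (boolP (s x == x)) => //= xF.
symmetry; apply/bigcupP; exists (porbit s x); last exact: porbit_id.
by rewrite imset_f // !inE.
Qed.

Lemma count_inv r : #|[set B : {set T} | (#|B| == r) && (s @: B == B)]| =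
  (\sum_(0 <= t < r.+1) 'C(#|F|, t) * binq #|P| (r - t) m)%N.
Proof. by rewrite card_inv card_D. Qed.
End Count.

Ltac try8 P :=
  first [ exists (@Ordinal 8 0 isT); P | exists (@Ordinal 8 1 isT); P
        | exists (@Ordinal 8 2 isT); P | exists (@Ordinal 8 3 isT); P
        | exists (@Ordinal 8 4 isT); P | exists (@Ordinal 8 5 isT); P
        | exists (@Ordinal 8 6 isT); P | exists (@Ordinal 8 7 isT); P ].

Ltac case8 g := case: g => [[|[|[|[|[|[|[|[|?]]]]]]]] ?] //.

Lemma d4_inv n g : exists h, forall c, @d4 n h (@d4 n g c) = c.
Proof.
case8 g; try8 ltac:(by case=> i j /=; rewrite ?rev_ordK).
Qed.

Lemma d4_comp n a b : exists c, forall x, @d4 n b (@d4 n a x) = @d4 n c x.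
Proof.
case8 a; case8 b; try8 ltac:(by case=> i j /=; rewrite ?rev_ordK).
Qed.

Lemma d4_inj n g : injective (@d4 n g).
Proof. by case: (d4_inv n g) => h hK; apply: (can_inj hK). Qed.

Definition pd n g : {perm cell n} := perm (@d4_inj n g).

Definition Gset n := [set pd n g | g : 'I_8].

Lemma Gset_group n : group_set (Gset n).
Proof.
apply/andP; split.
  apply/imsetP; exists (@Ordinal 8 0 isT) => //; apply/permP => x.
  by rewrite !permE; case: x.
apply/subsetP => _ /mulsgP[_ _ /imsetP[a _ ->] /imsetP[b _ ->] ->].
case: (d4_comp n a b) => c hc; apply/imsetP; exists c => //.
by apply/permP => x; rewrite permM !permE hc.
Qed.

Definition Gd4 n : {group {perm cell n}} := Group (Gset_group n).

Lemma fix_card n r (a : {perm cell n}) :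
  #|('Fix_(boards n r | 'P^*)[a])%g| = #|[set B : {set cell n} | (#|B| == r) && (a @: B == B)]|.
Proof.
apply: eq_card => B; rewrite in_setI [B \in boards _ _]inE [in RHS]inE; congr (_ && _).
by apply/afix1P/eqP.
Qed.

Lemma orbit_eq n (B : {set cell n}) : (orbit 'P^* (Gd4 n) B)%g = d4orbit B.
Proof.
apply/setP => X; rewrite /d4orbit inE; apply/imsetP/existsP => [[a /imsetP[g _ ->] ->]|[g /eqP ->]].
  exists g; apply/eqP/setP => y; rewrite /= /setact.
  by apply/imsetP/imsetP => -[x xB ->]; exists x => //=; rewrite apermE permE.
exists (pd n g); first exact: imset_f.
apply/setP => y; rewrite /= /setact.
by apply/imsetP/imsetP => -[x xB ->]; exists x => //=; rewrite apermE permE.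
Qed.

Lemma burnside n r : injective (pd n) ->
  (#|d4orbits n r| * 8 = \sum_(g : 'I_8) #|[set B : {set cell n} | (#|B| == r) && (pd n g @: B == B)]|)%N.
Proof.
move=> inj.
have acts : [acts Gd4 n, on boards n r | 'P^*]%g.
  apply/actsP => a _ B; rewrite !inE /=.
  by rewrite card_imset //; apply: perm_inj.
have := Frobenius_Cauchy acts.
have -> : #|Gd4 n| = 8 by rewrite /= card_imset // card_ord.
have -> : (orbit 'P^* (Gd4 n) @: boards n r)%g = d4orbits n r.
  by apply: eq_imset => B; rewrite orbit_eq.
move=> <-; rewrite /= big_imset /=; last by move=> x y _ _; apply: inj.
by apply: eq_bigr => g _; rewrite fix_card.
Qed.

Lemma pd_inj n : (2 < n)%N -> injective (pd n).
Proof.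
move=> hn a b eq.
have h0 : (0 < n)%N by lia. have h1 : (1 < n)%N by lia.
pose c1 : cell n := (Ordinal h0, Ordinal h1).
pose c2 : cell n := (Ordinal h0, Ordinal h0).
have e1 : (val (d4 a c1).1, val (d4 a c1).2) = (val (d4 b c1).1, val (d4 b c1).2).
  by have := congr1 (fun p : {perm cell n} => p c1) eq; rewrite !permE => ->.
have e2 : (val (d4 a c2).1, val (d4 a c2).2) = (val (d4 b c2).1, val (d4 b c2).2).
  by have := congr1 (fun p : {perm cell n} => p c2) eq; rewrite !permE => ->.
move: e1 e2; rewrite /c1 /c2; clear eq.
case8 a; case8 b; first [ by move=> _ _; apply/val_inj | move=> /= /pair_equal_spec [? ?] /pair_equal_spec [? ?]; lia ].
Qed.

Lemma porbit_card_eq (T : finType) (s : {perm T}) x m : (0 < m)%N -> iter m s x = x ->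
  (forall i, (0 < i < m)%N -> iter i s x != x) -> #|porbit s x| = m.
Proof.
move=> m0 itm hi.
have d0 : (0 < #|porbit s x|)%N by rewrite lt0n card_porbit_neq0.
have itd := iter_porbit s x.
case: (ltngtP #|porbit s x| m) => // [dm|md].
  by have := hi _ (introT andP (conj d0 dm)); rewrite itd eqxx.
have U := uniq_traject_porbit s x.
have : nth x (traject s x #|porbit s x|) 0 == nth x (traject s x #|porbit s x|) m.
  by rewrite !nth_traject // itm.
by rewrite nth_uniq ?size_traject //; case: m m0 {itm hi md}.
Qed.

Lemma iter_pd n g i (x : cell n) : iter i (pd n g) x = iter i (@d4 n g) x.
Proof. by elim: i => //= i ->; rewrite permE. Qed.

Lemma hm2 n g : (forall x, @d4 n g (d4 g x) = x) ->
  forall x, pd n g x != x -> #|porbit (pd n g) x| = 2.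
Proof.
move=> inv x nx; apply: porbit_card_eq => //; first by rewrite iter_pd /= inv.
by move=> [|[|i]] //= _; rewrite iter_pd in nx *.
Qed.

Lemma ltk k : (k < 2*k+1)%N. Proof. lia. Qed.
Definition ck k : 'I_(2*k+1) := Ordinal (ltk k).

Ltac natify := rewrite ?inE ?permE /= ?xpair_eqE -?val_eqE /=.

Lemma card_graph n (f : 'I_n -> 'I_n) : #|[set x : cell n | x.2 == f x.1]| = n.
Proof.
have -> : [set x : cell n | x.2 == f x.1] = [set (i, f i) | i : 'I_n].
  apply/setP => -[i j]; rewrite inE /=; apply/eqP/imsetP => [->|[i' _ [-> ->]]] //.
  by exists i.
by rewrite card_imset ?card_ord // => i i' [].
Qed.

Lemma card_graph' n (f : 'I_n -> 'I_n) : #|[set x : cell n | x.1 == f x.2]| = n.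
Proof.
have -> : [set x : cell n | x.1 == f x.2] = [set (f i, i) | i : 'I_n].
  apply/setP => -[i j]; rewrite inE /=; apply/eqP/imsetP => [->|[i' _ [-> ->]]] //.
  by exists j.
by rewrite card_imset ?card_ord // => i i' [].
Qed.

Lemma F_rot k (g : 'I_8) : (val g \in [:: 1; 2; 3])%N ->
  [set x : cell (2*k+1) | pd _ g x == x] = [set (ck k, ck k)].
Proof.
case8 g => _; apply/setP => -[i j]; natify; have := ltn_ord i; have := ltn_ord j; lia.
Qed.

Lemma F_refl k (g : 'I_8) : (val g \in [:: 4; 5; 6; 7])%N ->
  #|[set x : cell (2*k+1) | pd _ g x == x]| = (2*k+1)%N.
Proof.
case8 g => _.
- transitivity #|[set x : cell (2*k+1) | x.1 == ck k]|; last exact: (card_graph' (fun _ => ck k)).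
  apply: eq_card => -[i j]; natify.
  have := ltn_ord i; have := ltn_ord j; lia.
- transitivity #|[set x : cell (2*k+1) | x.2 == ck k]|; last exact: (card_graph (fun _ => ck k)).
  apply: eq_card => -[i j]; natify.
  have := ltn_ord i; have := ltn_ord j; lia.
- transitivity #|[set x : cell (2*k+1) | x.2 == x.1]|; last exact: (card_graph id).
  apply: eq_card => -[i j]; natify.
  have := ltn_ord i; have := ltn_ord j; lia.
- transitivity #|[set x : cell (2*k+1) | x.2 == rev_ord x.1]|; last exact: (card_graph (@rev_ord _)).
  apply: eq_card => -[i j]; natify.
  have := ltn_ord i; have := ltn_ord j; lia.
Qed.

Definition fixc k r (g : 'I_8) :=
  #|[set B : {set cell (2*k+1)} | (#|B| == r) && (pd _ g @: B == B)]|.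

Lemma fix_gen k r (g : 'I_8) m f p : (0 < m)%N ->
  (forall x, pd _ g x != x -> #|porbit (pd (2*k+1) g) x| = m) ->
  #|[set x : cell (2*k+1) | pd _ g x == x]| = f ->
  ((2*k+1)*(2*k+1) = f + m * p)%N ->
  fixc k r g = (\sum_(0 <= t < r.+1) 'C(f, t) * binq p (r - t) m)%N.
Proof.
move=> m0 hm hf hT; rewrite /fixc (count_inv m0 hm) hf.
have := card_T hm; rewrite card_prod card_ord hf hT => /eqP.
rewrite eqn_add2l eqn_pmul2l // => /eqP ->.
by [].
Qed.

Lemma hm_inv k (g : 'I_8) : (val g \in [:: 2; 4; 5; 6; 7])%N ->
  forall x, pd _ g x != x -> #|porbit (pd (2*k+1) g) x| = 2.
Proof.
move=> hg; apply: hm2; move: hg; case8 g => _ [i j]; by rewrite /= ?rev_ordK.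
Qed.

Lemma hm_rot k (g : 'I_8) : (val g \in [:: 1; 3])%N ->
  forall x, pd _ g x != x -> #|porbit (pd (2*k+1) g) x| = 4.
Proof.
case8 g => _ [i j] nx; apply: porbit_card_eq => //; rewrite ?iter_pd.
- by apply/eqP; natify; have := ltn_ord i; have := ltn_ord j; lia.
- move=> [|[|[|[|?]]]] //= _; rewrite ?iter_pd; move: nx; natify;
  have := ltn_ord i; have := ltn_ord j; lia.
- by apply/eqP; natify; have := ltn_ord i; have := ltn_ord j; lia.
- move=> [|[|[|[|?]]]] //= _; rewrite ?iter_pd; move: nx; natify;
  have := ltn_ord i; have := ltn_ord j; lia.
Qed.

Lemma fix0 k r (g : 'I_8) : val g == 0%N -> fixc k r g = 'C((2 * k + 1) ^ 2, r).
Proof.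
move=> hg; rewrite /fixc.
have -> : [set B : {set cell (2*k+1)} | (#|B| == r) && (pd _ g @: B == B)] =
          [set B : {set cell (2*k+1)} | #|B| == r].
  apply/setP => B; rewrite !inE; case: eqP => //= _.
  have e : forall x, pd (2*k+1) g x = x.
    by move=> x; rewrite permE; case: x => i j; move: hg; case8 g.
  by apply/eqP/setP => x; apply/imsetP/idP => [[y yB ->]|xB]; [rewrite e | exists x; rewrite ?e].
by rewrite card_draws card_prod card_ord mulnn.
Qed.

Lemma sum1 r (c : nat -> nat) : (0 < r)%N ->
  (\sum_(0 <= t < r.+1) 'C(1, t) * c t = c 0 + c 1)%N.
Proof.
move=> r0; rewrite big_ltn // big_ltn; last lia.
rewrite big_nat big1 ?addn0 ?bin0 ?bin1 ?mul1n // => t /andP[t2 _].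
by rewrite bin_small.
Qed.

Lemma fixrot k r (g : 'I_8) : (val g \in [:: 1; 3])%N -> (0 < r)%N ->
  fixc k r g = (binq (k * (k + 1)) r 4 + binq (k * (k + 1)) (r - 1) 4)%N.
Proof.
move=> hg r0.
rewrite (@fix_gen k r g 4 1 (k * (k + 1))) //.
- by rewrite sum1 // subn0.
- exact: hm_rot.
- rewrite F_rot ?cards1 //; move: hg; by case8 g.
- nia.
Qed.

Lemma binq2 p r : (0 < r)%N -> (binq p r 2 + binq p (r - 1) 2)%N = 'C(p, r./2).
Proof.
move=> r0; rewrite /binq !dvdn2 oddB // /= -!divn2.
case: (boolP (odd r)) => /= h.
  have -> : ((r - 1) %/ 2 = r %/ 2)%N by have := modn2 r; rewrite h => hm; lia.
  by [].
by rewrite addn0.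
Qed.

Lemma fix2 k r (g : 'I_8) : val g == 2%N -> (0 < r)%N ->
  fixc k r g = 'C(2 * k * (k + 1), r./2).
Proof.
move=> hg r0.
rewrite (@fix_gen k r g 2 1 (2 * k * (k + 1))) //.
- by rewrite sum1 // subn0 binq2.
- by apply: hm_inv; move: hg; case8 g.
- rewrite F_rot ?cards1 //; move: hg; by case8 g.
- nia.
Qed.

Lemma fixrefl k r (g : 'I_8) : (val g \in [:: 4; 5; 6; 7])%N ->
  fixc k r g = (\sum_(0 <= t < r.+1) 'C(2 * k + 1, t) * binq (k * (2 * k + 1)) (r - t) 2)%N.
Proof.
move=> hg.
rewrite (@fix_gen k r g 2 (2 * k + 1) (k * (2 * k + 1))) //.
- by apply: hm_inv; move: hg; case8 g.
- exact: F_refl.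
- nia.
Qed.
Unset Implicit Arguments.
Import GRing.Theory Num.Theory.
Local Open Scope ring_scope.

Theorem proposition5p2 (k r : nat) (hk : (1 <= k)%N)
  (hr1 : (1 <= r)%N) (hr2 : (r <= (2 * k + 1) ^ 2)%N) :
  (#|d4orbits (2 * k + 1) r|)%:R =
  (1 / 8 : rat) *
  (('C((2 * k + 1) ^ 2, r))%:R
   + 2 * (binq (k * (k + 1)) r 4)%:R
   + 2 * (binq (k * (k + 1)) (r - 1) 4)%:R
   + ('C(2 * k * (k + 1), r./2))%:R
   + 4 * (\sum_(0 <= t < r.+1) 'C(2 * k + 1, t) * binq (k * (2 * k + 1)) (r - t) 2)%N%:R).
Proof.
have inj : injective (pd (2 * k + 1)) by apply: pd_inj; lia.
have H := burnside r inj.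
have E : (\sum_(g : 'I_8) fixc k r g =
   'C((2 * k + 1) ^ 2, r) + 2 * binq (k * (k + 1)) r 4 + 2 * binq (k * (k + 1)) (r - 1) 4
   + 'C(2 * k * (k + 1), r./2)
   + 4 * (\sum_(0 <= t < r.+1) 'C(2 * k + 1, t) * binq (k * (2 * k + 1)) (r - t) 2))%N.
  rewrite !big_ord_recl big_ord0.
  rewrite fix0 // fixrot // fix2 // fixrot // !fixrefl //.
  lia.
rewrite /fixc in E; rewrite E in H.
have -> : (#|d4orbits (2 * k + 1) r|)%:R = (#|d4orbits (2 * k + 1) r| * 8)%N%:R / 8 :> rat.
  by rewrite natrM; field.
by rewrite H !natrD ?natrM; field.
Qed.
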